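(* Let $P$ be a positive event pattern, $I$ an event stream, $G=(V,\mathcal{E})$ the GRETA graph of $P$ and $I$, $E$ an event type, and suppose every event of type $E$ carries a real-valued attribute $attr$. For $e \in V$ let $Pr(e)=\{p\in V:(p,e)\in\mathcal{E}\}$, let $End=\{e \in V : e.type = end(P)\}$, and let $e.count$ be defined recursively in increasing time order by $e.count = [e.type=start(P)] + \sum_{p\in Pr(e)} p.count$. Define recursively in increasing time order, for $e \in V$: if $e.type = E$: $e.count_E = e.count + \sum_{p\in Pr(e)} p.count_E$, $e.min = \min(\{e.attr\}\cup\{p.min : p\in Pr(e)\})$, $e.max = \max(\{e.attr\}\cup\{p.max : p\in Pr(e)\})$, $e.sum = e.attr\cdot e.count + \sum_{p\in Pr(e)} p.sum$; if $e.type \neq E$: $e.count_E = \sum_{p\in Pr(e)} p.count_E$, $e.min = \min_{p\in Pr(e)} p.min$, $e.max = \max_{p\in Pr(e)} p.max$, $e.sum = \sum_{p\in Pr(e)} p.sum$ (with $\min\emptyset = +\infty$, $\max\emptyset=-\infty$, empty sums $=0$). Then $\mathsf{COUNT}(E) = \sum_{e\in End} e.count_E$, $\mathsf{MIN}(E.attr) = \min_{e\in End} e.min$, $\mathsf{MAX}(E.attr) = \max_{e\in End} e.max$, $\mathsf{SUM}(E.attr) = \sum_{e\in End} e.sum$, and $\mathsf{AVG}(E.attr) = \mathsf{SUM}(E.attr)/\mathsf{COUNT}(E)$.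
   Context: Events: each event $e$ has an event type $e.type$ and an occurrence time $e.time \in \mathbb{Q}_{\ge 0}$. An event stream $I$ is a finite collection of distinct events arriving in nondecreasing order of time. Positive patterns: an event type $E$ is a pattern; if $P_i,P_j$ are patterns then $P_i+$ and $\mathsf{SEQ}(P_i,P_j)$ are patterns; each event type occurs at most once in a pattern. Matches over $I$: $matches(E)=\{(e): e\in I, e.type=E\}$; $(e_1,\dots,e_k)\in matches(\mathsf{SEQ}(P_i,P_j))$ iff for some $1\le m\le k$, $(e_1,\dots,e_m)\in matches(P_i)$, $(e_{m+1},\dots,e_k)\in matches(P_j)$ and $e_1.time<\dots<e_k.time$; $matches(P_i+)$ consists of concatenations $s_1\cdots s_k$ ($k\ge1$) with each $s_l\in matches(P_i)$ and the last event of $s_l$ strictly earlier than the first event of $s_{l+1}$. Trends matched by $P$ in $I$ are the elements of $matches(P)$. Define $start(E)=end(E)=E$, $start(P_i+)=start(P_i)$, $end(P_i+)=end(P_i)$, $start(\mathsf{SEQ}(P_i,P_j))=start(P_i)$, $end(\mathsf{SEQ}(P_i,P_j))=end(P_j)$. The GRETA graph $G=(V,\mathcal{E})$ has as vertices the events of $I$ occurring in at least one trend matched by $P$ in $I$, and an edge $(e_i,e_j)$ iff $e_i,e_j$ are consecutive events, in this order, in some trend matched by $P$ in $I$. Aggregates over all trends matched by $P$ in $I$: $\mathsf{COUNT}(E)$ is the total number of occurrences of events of type $E$ in all trends (summed over trends); $\mathsf{MIN}(E.attr)$ ($\mathsf{MAX}(E.attr)$) is the minimum (maximum) of $attr$ over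 all events of type $E$ in all trends; $\mathsf{SUM}(E.attr)$ is the sum, over all trends and all events of type $E$ in each trend, of $attr$; $\mathsf{AVG}(E.attr)=\mathsf{SUM}(E.attr)/\mathsf{COUNT}(E)$. *)

(* Defs.v *)
From HB Require Import structures.
From mathcomp Require Import all_boot all_order all_algebra.
From mathcomp Require Import boolp classical_sets fsbigop reals constructive_ereal ereal.

Set Implicit Arguments.
Unset Strict Implicit.
Unset Printing Implicit Defensive.
Import Order.TTheory GRing.Theory Num.Theory.

Local Open Scope classical_set_scope.
Local Open Scope ring_scope.

Inductive pattern (T : Type) : Type :=
| PType of T
| PPlus of pattern T
| PSeq of pattern T & pattern T.

Arguments PType {T}.
Arguments PPlus {T}.
Arguments PSeq {T}.

Fixpoint ptypes (T : Type) (P : pattern T) : seq T :=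
  match P with
  | PType E => [:: E]
  | PPlus Q => ptypes Q
  | PSeq Q1 Q2 => ptypes Q1 ++ ptypes Q2
  end.

Definition wf_pattern (T : eqType) (P : pattern T) : bool := uniq (ptypes P).

Fixpoint pstart (T : Type) (P : pattern T) : T :=
  match P with
  | PType E => E
  | PPlus Q => pstart Q
  | PSeq Q1 _ => pstart Q1
  end.

Fixpoint pend (T : Type) (P : pattern T) : T :=
  match P with
  | PType E => E
  | PPlus Q => pend Q
  | PSeq _ Q2 => pend Q2
  end.

Section Matches.
Variables (T : eqType) (Ev : choiceType) (typ : Ev -> T) (time : Ev -> rat).
Variable I : seq Ev.

Definition time_increasing (s : seq Ev) : bool :=
  sorted (fun x y => time x < time y) s.

Inductive matches : pattern T -> seq Ev -> Prop :=
| MType (E : T) (e : Ev) :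
    e \in I -> typ e = E -> matches (PType E) [:: e]
| MSeq (P1 P2 : pattern T) (s1 s2 : seq Ev) :
    matches P1 s1 -> matches P2 s2 -> time_increasing (s1 ++ s2) ->
    matches (PSeq P1 P2) (s1 ++ s2)
| MPlus1 (P : pattern T) (s : seq Ev) :
    matches P s -> matches (PPlus P) s
| MPlusS (P : pattern T) (s1 : seq Ev) (a b : Ev) (s2 : seq Ev) :
    matches P (rcons s1 a) -> matches (PPlus P) (b :: s2) -> time a < time b ->
    matches (PPlus P) (rcons s1 a ++ b :: s2).

Definition trends (P : pattern T) : set (seq Ev) := [set s | matches P s].

Definition greta_vertex (P : pattern T) (e : Ev) : Prop :=
  exists2 s, matches P s & e \in s.

Definition greta_edge (P : pattern T) (ei ej : Ev) : Prop :=
  exists2 s, matches P s & exists s1 s2, s = s1 ++ ei :: ej :: s2.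

Definition preds (P : pattern T) (e : Ev) : set Ev :=
  [set p | greta_vertex P p /\ greta_edge P p e].

Definition end_vertices (P : pattern T) : set Ev :=
  [set e | greta_vertex P e /\ typ e = pend P].

Definition agg_COUNT (P : pattern T) (E : T) : nat :=
  \big[addn/0%N]_(s \in trends P) count (fun e => typ e == E) s.

Variable R : realType.
Variable attr : Ev -> R.

Definition agg_SUM (P : pattern T) (E : T) : R :=
  \sum_(s \in trends P) \sum_(e <- s | typ e == E) attr e.

(* min / max over all E-events in all trends; min of empty = +oo, max of empty = -oo *)
Definition agg_MIN (P : pattern T) (E : T) : \bar R :=
  ereal_inf [set (attr e)%:E | e in [set e | typ e = E /\
                                   exists2 s, matches P s & e \in s]].

Definition agg_MAX (P : pattern T) (E : T) : \bar R :=
  ereal_sup [set (attr e)%:E | e in [set e | typ e = E /\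
                                   exists2 s, matches P s & e \in s]].

Definition agg_AVG (P : pattern T) (E : T) : R :=
  agg_SUM P E / (agg_COUNT P E)%:R.

End Matches.

(* Main.v *)
Require Import Defs.
From HB Require Import structures.
From mathcomp Require Import all_boot all_order all_algebra.
From mathcomp Require Import boolp classical_sets fsbigop reals constructive_ereal ereal cardinality.
From mathcomp Require Import ring lra zify.
Import Order.TTheory GRing.Theory Num.Theory.
Local Open Scope classical_set_scope.
Local Open Scope ring_scope.
Set Implicit Arguments.
Unset Strict Implicit.
Unset Printing Implicit Defensive.

Section Lang.
Variable T : eqType.

Inductive lang : pattern T -> seq T -> Prop :=
| LType E : lang (PType E) [:: E]
| LSeq P1 P2 w1 w2 : lang P1 w1 -> lang P2 w2 -> lang (PSeq P1 P2) (w1 ++ w2)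
| LPlus1 P w : lang P w -> lang (PPlus P) w
| LPlusS P w1 w2 : lang P w1 -> lang (PPlus P) w2 -> lang (PPlus P) (w1 ++ w2).

Lemma lang_letters P w : lang P w -> {subset w <= ptypes P}.
Proof.
elim=> //=.
- by move=> E x; rewrite inE => /eqP ->.
- by move=> P1 P2 w1 w2 _ H1 _ H2 x; rewrite !mem_cat => /orP[/H1->|/H2->]; rewrite ?orbT.
- by move=> P1 w1 w2 _ H1 _ H2 x; rewrite !mem_cat => /orP[/H1->|/H2->].
Qed.

Lemma lang_head P w : lang P w -> exists w', w = pstart P :: w'.
Proof.
elim=> //=.
- by move=> E; exists [::].
- by move=> P1 P2 w1 w2 _ [w' ->] _ _; exists (w' ++ w2).
- by move=> P1 w1 w2 _ [w' ->] _ _; exists (w' ++ w2).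
Qed.

Lemma lang_last P w : lang P w -> exists w', w = rcons w' (pend P).
Proof.
elim=> //=.
- by move=> E; exists [::].
- by move=> P1 P2 w1 w2 _ _ _ [w' ->]; exists (w1 ++ w'); rewrite rcons_cat.
- by move=> P1 w1 w2 _ _ _ [w' ->]; exists (w1 ++ w'); rewrite rcons_cat.
Qed.

Lemma split_cat (x y w1 w2 : seq T) (a : T) : x ++ a :: y = w1 ++ w2 ->
  (exists y1, w1 = x ++ a :: y1 /\ y = y1 ++ w2) \/
  (exists x2, x = w1 ++ x2 /\ w2 = x2 ++ a :: y).
Proof.
elim: x w1 => [|z x IH] [|c w1] /=.
- by move=> <-; right; exists [::].
- by case=> -> ->; left; exists w1.
- by move=> <-; right; exists (z :: x).
- case=> -> /IH [[y1 [-> ->]]|[x2 [-> ->]]]; first by left; exists y1.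
  by right; exists x2.
Qed.

Lemma langPlus_cat P u v : lang (PPlus P) u -> lang (PPlus P) v -> lang (PPlus P) (u ++ v).
Proof.
move=> H; move: H v.
have: forall Q u, lang Q u -> forall P, Q = PPlus P -> forall v, lang (PPlus P) v -> lang (PPlus P) (u ++ v).
  move=> Q u0; elim=> // {Q u0}.
  - by move=> P0 w Hw _ P1 [<-] v Hv; apply: LPlusS.
  - move=> P0 w1 w2 H1 _ H2 IH P1 [<-] v Hv; rewrite -catA; apply: LPlusS => //.
    exact: IH.
by move=> H1 Hu; apply: H1 Hu P erefl.
Qed.

Definition optplus P u := u = [::] \/ lang (PPlus P) u.

Lemma optplus_cat P u v : optplus P u -> lang (PPlus P) v -> lang (PPlus P) (u ++ v).
Proof. by case=> [->//|Hu] Hv; apply: langPlus_cat. Qed.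

Lemma optplus_catr P u v : lang P u -> optplus P v -> lang (PPlus P) (u ++ v).
Proof. by move=> Hu [->|Hv]; [rewrite cats0; apply: LPlus1| apply: LPlusS]. Qed.

Lemma plus_decomp P x a y : lang (PPlus P) (x ++ a :: y) ->
  exists x0 x1 y1 y0, [/\ x = x0 ++ x1, y = y1 ++ y0, optplus P x0,
     lang P (x1 ++ a :: y1) & optplus P y0].
Proof.
move=> H.
have: forall Q w, lang Q w -> forall P, Q = PPlus P -> forall x y, w = x ++ a :: y ->
  exists x0 x1 y1 y0, [/\ x = x0 ++ x1, y = y1 ++ y0, optplus P x0,
     lang P (x1 ++ a :: y1) & optplus P y0].
  move=> Q w; elim=> // {Q w}.
  - move=> P0 w Hw _ P1 [<-] x0 y0 E; exists [::], x0, y0, [::].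
    by rewrite cats0; split=> //; first (by left); last (by left); rewrite -E.
  - move=> P0 w1 w2 H1 _ H2 IH P1 [<-] x0 y0 /esym /split_cat
      [[y1 [E1 E2]]|[x2 [E1 E2]]].
    + exists [::], x0, y1, w2; split=> //; first (by left); last (by right); by rewrite -E1.
    + have [x0' [x1 [y1 [y0' [Ex Ey Hx0 Hl Hy0]]]]] := IH P0 erefl _ _ E2.
      exists (w1 ++ x0'), x1, y1, y0'; split=> //.
      * by rewrite E1 Ex catA.
      * by right; apply: optplus_catr.
by move=> /(_ _ _ H P erefl x y erefl).
Qed.

Lemma lang_type E w : lang (PType E) w -> w = [:: E].
Proof. by move=> H; inversion H. Qed.

Lemma splice P x a y x' y' : wf_pattern P ->
  lang P (x ++ a :: y) -> lang P (x' ++ a :: y') -> lang P (x ++ a :: y').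
Proof.
rewrite /wf_pattern.
elim: P x y x' y' => [E|Q IH|P1 IH1 P2 IH2] x y x' y' /= wf.
- move=> /lang_type H1 /lang_type H2.
  case: x H1 => [|? [|]] //= [] Ea Ey; subst; case: x' H2 => [|? [|]] //= [] *; subst; constructor.

- move=> /plus_decomp [x0 [x1 [y1 [y0 [-> _ Hx0 H1 Hy0]]]]].
  move=> /plus_decomp [x0' [x1' [y1' [y0' [_ -> Hx0' H1' Hy0']]]]].
  have H := IH _ _ _ _ wf H1 H1'.
  rewrite -catA; case: Hx0 => [->|Hx0] /=.
    by rewrite -cat_cons catA; apply: optplus_catr.
  apply: langPlus_cat => //; rewrite -cat_cons catA; exact: optplus_catr.
- have [u1 u2] : uniq (ptypes P1) /\ uniq (ptypes P2).
    by move: wf; rewrite cat_uniq => /and3P[].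
  have dis : forall b, b \in ptypes P1 -> b \in ptypes P2 -> False.
    move=> b b1 b2; move: wf; rewrite cat_uniq => /and3P[_ /hasP + _].
    by apply; exists b.
  move=> H; inversion H; subst => H'; inversion H'; subst.
  case: (split_cat (esym H2)) => [[z1 [E1 E2]]|[z2 [E1 E2]]];
  case: (split_cat (esym H5)) => [[z1' [E1' E2']]|[z2' [E1' E2']]]; subst.
  + have := IH1 _ _ _ _ u1 H3 H6 => Hl.
    by rewrite -[_ :: z1' ++ _]cat_cons catA; apply: LSeq.
  + exfalso; apply: (dis a).
    * by apply: (lang_letters H3); rewrite mem_cat inE eqxx orbT.
    * by apply: (lang_letters H7); rewrite mem_cat inE eqxx orbT.
  + exfalso; apply: (dis a).
    * by apply: (lang_letters H6); rewrite mem_cat inE eqxx orbT.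
    * by apply: (lang_letters H4); rewrite mem_cat inE eqxx orbT.
  + have := IH2 _ _ _ _ u2 H4 H7 => Hl.
    by rewrite -catA; apply: LSeq.
Qed.

End Lang.

Section Events.
Variables (T : eqType) (Ev : choiceType) (typ : Ev -> T) (time : Ev -> rat) (I : seq Ev).
Variable P : pattern T.
Hypothesis wfP : wf_pattern P.

Local Notation M := (matches typ time I).
Local Notation ti := (time_increasing time).
Local Notation V := (greta_vertex typ time I P).
Local Notation Pr := (preds typ time I P).
Local Notation End := (end_vertices typ time I P).

Definition ltt : rel Ev := fun x y => time x < time y.
Lemma ltt_trans : transitive ltt.
Proof. by move=> y x z; rewrite /ltt; apply: lt_trans. Qed.

Lemma sorted_splice (r : rel Ev) x p z : sorted r (rcons x p) -> sorted r (p :: z) ->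
  sorted r (x ++ p :: z).
Proof.
case: x => [|c x] //= H1 H2.
by rewrite -cat_rcons cat_path H1 last_rcons.
Qed.

Lemma sorted_join (r : rel Ev) x a b z : sorted r (rcons x a) -> sorted r (b :: z) -> r a b ->
  sorted r (rcons x a ++ b :: z).
Proof.
move=> H1 H2 Hab; rewrite cat_rcons; apply: sorted_splice => //=.
by rewrite Hab.
Qed.

Lemma sorted_pre s t : ti (s ++ t) -> ti s.
Proof. by apply: subseq_sorted; [exact: ltt_trans| exact: prefix_subseq]. Qed.
Lemma sorted_suf s t : ti (s ++ t) -> ti t.
Proof. by apply: subseq_sorted; [exact: ltt_trans| exact: suffix_subseq]. Qed.

Lemma sorted_ab x a b z : ti (rcons x a ++ b :: z) -> time a < time b.
Proof.
rewrite cat_rcons => /sorted_suf /=; by case/andP.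
Qed.

Lemma matches_prop Q s : M Q s -> [/\ {subset s <= I}, ti s & lang Q (map typ s)].
Proof.
elim=> {Q s}.
- move=> E e eI <-; split=> //; first by move=> x; rewrite inE => /eqP->.
  exact: LType.
- move=> P1 P2 s1 s2 _ [H1 _ L1] _ [H2 _ L2] Ht; split=> //.
  + by move=> x; rewrite mem_cat => /orP[/H1|/H2].
  + by rewrite map_cat; apply: LSeq.
- by move=> Q s _ [H1 H2 H3]; split=> //; apply: LPlus1.
- move=> Q s1 a b s2 _ [H1 T1 L1] _ [H2 T2 L2] Hab; split.
  + by move=> x; rewrite mem_cat => /orP[/H1|/H2].
  + exact: sorted_join.
  + by rewrite map_cat; apply: LPlusS.
Qed.

Lemma lang_nonnil (Q : pattern T) w : lang Q w -> w <> [::].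
Proof. by move=> /lang_head [w' ->]. Qed.

Lemma lang_matches Q s : lang Q (map typ s) -> {subset s <= I} -> ti s -> M Q s.
Proof.
move=> H.
have: forall (Q : pattern T) (w : seq T), lang Q w -> forall s, map typ s = w -> {subset s <= I} -> ti s -> M Q s;
  last by move=> /(_ _ _ H s erefl).
move=> {H s} Q0 w; elim=> {Q0 w}.
- move=> E [|e [|]] //= [] Ee sI _; apply: MType => //; apply: sI; exact: mem_head.
- move=> P1 P2 w1 w2 _ IH1 _ IH2 s Es sI st.
  have Et : map typ (take (size w1) s) = w1 by rewrite map_take Es take_size_cat.
  have Ed : map typ (drop (size w1) s) = w2 by rewrite map_drop Es drop_size_cat.
  rewrite -(cat_take_drop (size w1) s); apply: MSeq.
  + apply: IH1 => //; first by move=> x /mem_take /sI.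
    by apply: (@sorted_pre _ (drop (size w1) s)); rewrite cat_take_drop.
  + apply: IH2 => //; first by move=> x /mem_drop /sI.
    by apply: (@sorted_suf (take (size w1) s)); rewrite cat_take_drop.
  + by rewrite cat_take_drop.
- by move=> Q0 w _ IH s Es sI st; apply: MPlus1; apply: IH.
- move=> Q0 w1 w2 H1 IH1 H2 IH2 s Es sI st.
  have Et : map typ (take (size w1) s) = w1 by rewrite map_take Es take_size_cat.
  have Ed : map typ (drop (size w1) s) = w2 by rewrite map_drop Es drop_size_cat.
  have st' := st; rewrite -(cat_take_drop (size w1) s) in st'.
  have sI1 : {subset take (size w1) s <= I} by move=> x /mem_take /sI.
  have sI2 : {subset drop (size w1) s <= I} by move=> x /mem_drop /sI.
  have M1 := IH1 _ Et sI1 (sorted_pre st').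
  have M2 := IH2 _ Ed sI2 (sorted_suf st').
  rewrite -(cat_take_drop (size w1) s).
  move: M1 M2 st'; case/lastP: (take (size w1) s) Et => [|x a].
    by move=> /esym /(lang_nonnil H1).
  move=> _; case: (drop (size w1) s) Ed => [|b z].
    by move=> /esym /(lang_nonnil H2).
  move=> _ M1 M2 st'; apply: MPlusS => //.
  exact: sorted_ab st'.
Qed.


Definition Pre (e : Ev) : set (seq Ev) :=
  [set s | (exists s0, s = rcons s0 e) /\ exists t, M P (s ++ t)].

Lemma pre_rec e s : V e ->
  (Pre e s <-> (s = [:: e] /\ typ e = pstart P) \/
                exists p s', [/\ Pr e p, Pre p s' & s = rcons s' e]).
Proof.
move=> Ve; split.
- move=> [[s0 ->] [t Hm]]; case/lastP: s0 Hm => [|s1 p] Hm.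
  + left; split=> //; have [_ _ /lang_head [w' /=]] := matches_prop Hm.
    by case.
  + right; exists p, (rcons s1 p); split=> //.
    * split.
      - exists (rcons (rcons s1 p) e ++ t) => //.
        by rewrite mem_cat mem_rcons inE mem_rcons mem_head !orbT.
      - exists (rcons (rcons s1 p) e ++ t) => //.
        by exists s1, t; rewrite -!cats1 -!catA.
    * rewrite /Pre /=; split; first by exists s1.
      by exists (e :: t); rewrite -cat_rcons.
- case.
  + move=> [-> Hst]; case: Ve => u Mu eu.
    case/splitPr: u / eu Mu => u1 u2 Mu.
    rewrite /Pre /=; split; first by exists [::].
    exists u2 => /=.
    have [uI ut ul] := matches_prop Mu.
    apply: lang_matches.
    * have [w' Ew] := lang_head ul.
      have ul2 : lang P ([::] ++ typ e :: w') by rewrite /= Hst -Ew.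
      have ul3 : lang P (map typ u1 ++ typ e :: map typ u2) by rewrite -map_cons -map_cat.
      exact: (splice wfP ul2 ul3).
    * by move=> x xu; apply: uI; rewrite mem_cat xu orbT.
    * exact: sorted_suf ut.
  + move=> [p [s' [[Vp [u Mu [u1 [u2 Eu]]]] [[s0 Es'] [t Mt]] ->]]].
    subst s' u.
    rewrite /Pre /=; split; first by exists (rcons s0 p).
    exists u2.
    have [uI ut ul] := matches_prop Mu.
    have [tI tt tl] := matches_prop Mt.
    rewrite cat_rcons cat_rcons; apply: lang_matches.
    * move: ul tl; rewrite !map_cat !map_rcons /= cat_rcons => ul tl.
      exact: (splice wfP tl ul).
    * move=> x; rewrite mem_cat => /orP[xs|xu].
        by apply: tI; rewrite mem_cat mem_rcons inE xs orbT.
      by apply: uI; rewrite mem_cat xu orbT.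
    * apply: sorted_splice; first exact: sorted_pre tt.
      exact: sorted_suf ut.
Qed.

Lemma pre_last e e' s : Pre e s -> Pre e' s -> e = e'.
Proof. by move=> [[s0 ->] _] [[s1 /rcons_inj [_ ->]] _]. Qed.

Lemma pre_nonnil e s : Pre e s -> s <> [::].
Proof. by move=> [[s0 ->] _]; case: s0. Qed.

Lemma trends_pre s : trends typ time I P s <-> exists e, End e /\ Pre e s.
Proof.
split.
- move=> Ms; have [sI st sl] := matches_prop Ms.
  case/lastP: s Ms sI st sl => [|s0 e] Ms sI st sl; first by have := lang_nonnil sl.
  exists e; split; last by rewrite /Pre /=; split; [exists s0|exists [::]; rewrite cats0].
  split; first by exists (rcons s0 e) => //; rewrite mem_rcons mem_head.
  have [w'] := lang_last sl; rewrite map_rcons => /rcons_inj [_ ->] //.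
- move=> [e [[Ve Te] [[s0 ->] [t Mt]]]].
  have [tI tt tl] := matches_prop Mt.
  apply: lang_matches.
  + have [w' Ew] := lang_last tl.
    have tl2 : lang P (w' ++ typ e :: [::]) by rewrite cats1 Te -Ew.
    move: tl; rewrite map_cat map_rcons cat_rcons => tl.
    by rewrite -cats1; apply: (splice wfP tl tl2).
  + by move=> x xs; apply: tI; rewrite mem_cat xs.
  + exact: sorted_pre tt.
Qed.


Fixpoint allseqs (n : nat) : seq (seq Ev) :=
  if n is m.+1 then [::] :: [seq x :: s | x <- I, s <- allseqs m] else [:: [::]].

Lemma allseqsP n s : (size s <= n)%N -> {subset s <= I} -> s \in allseqs n.
Proof.
elim: n s => [|n IH] [|x s] //=; rewrite ?mem_head // ltnS => sz sI.
rewrite inE; apply/orP; right; apply: allpairs_f.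
  by apply: sI; rewrite mem_head.
by apply: IH => // y ys; apply: sI; rewrite inE ys orbT.
Qed.

Lemma M_allseqs s : {subset s <= I} -> ti s -> s \in allseqs (size I).
Proof.
move=> sI st; apply: allseqsP => //; apply: uniq_leq_size => //.
by apply: (sorted_uniq ltt_trans) => // x; rewrite /ltt ltxx.
Qed.

Lemma pre_fin e : finite_set (Pre e).
Proof.
apply: (sub_finite_set _ (finite_seq (allseqs (size I)))) => s [[s0 ->] [t Mt]] /=.
have [tI tt _] := matches_prop Mt.
apply: M_allseqs; first by move=> x xs; apply: tI; rewrite mem_cat xs.
exact: sorted_pre tt.
Qed.

Lemma trends_fin : finite_set (trends typ time I P).
Proof.
apply: (sub_finite_set _ (finite_seq (allseqs (size I)))) => s Ms /=.
by have [sI st _] := matches_prop Ms; apply: M_allseqs.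
Qed.

Lemma V_in e : V e -> e \in I.
Proof. by case=> s /matches_prop [sI _ _] /sI. Qed.

Lemma Pr_fin e : finite_set (Pr e).
Proof.
by apply: (sub_finite_set _ (finite_seq I)) => p [Vp _] /=; apply: V_in.
Qed.

Lemma End_fin : finite_set End.
Proof.
by apply: (sub_finite_set _ (finite_seq I)) => p [Vp _] /=; apply: V_in.
Qed.

Lemma Pr_V e p : Pr e p -> V p.
Proof. by case. Qed.

Lemma Pr_time e p : Pr e p -> time p < time e.
Proof.
move=> [_ [u /matches_prop [_ ut _] [u1 [u2 Eu]]]].
by move: ut; rewrite Eu => /sorted_suf /= /andP[].
Qed.

Definition rank e := count (fun x => time x < time e) I.

Lemma count_lt (a1 a2 : pred Ev) s x : subpred a1 a2 -> x \in s -> a2 x -> ~~ a1 x ->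
  (count a1 s < count a2 s)%N.
Proof.
move=> sub; elim: s => [|y s IH] //=; rewrite inE => /orP[/eqP <-|xs] a2x a1x.
  rewrite a2x (negbTE a1x) /= add0n add1n ltnS.
  by apply: sub_count.
have := IH xs a2x a1x; case: (a1 y) (sub y) => [->//|] /=; rewrite add0n => _ H.
by apply: (leq_trans H); apply: leq_addl.
Qed.

Lemma rank_lt e p : Pr e p -> (rank p < rank e)%N.
Proof.
move=> Hp; apply: (count_lt (x := p)).
- by move=> x /= H; apply: lt_trans H (Pr_time Hp).
- exact: V_in (Pr_V Hp).
- exact: Pr_time Hp.
- by rewrite /= ltxx.
Qed.

Lemma strong_ind (Q : Ev -> Prop) :
  (forall e, V e -> (forall p, Pr e p -> Q p) -> Q e) -> forall e, V e -> Q e.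
Proof.
move=> step.
suff H : forall n e, (rank e < n)%N -> V e -> Q e by move=> e; apply: (H (rank e).+1).
elim=> [//|n IH] e lt Ve; apply: step => // p Hp; apply: IH; last exact: Pr_V Hp.
by apply: leq_trans (rank_lt Hp) _; rewrite -ltnS.
Qed.

End Events.

Lemma fsbig_bigcup_disj (R : Type) (idx : R) (op : Monoid.com_law idx) (J K : choiceType)
  (A : set J) (B : J -> set K) (F : K -> R) :
  finite_set A -> (forall j, A j -> finite_set (B j)) ->
  (forall j j' k, A j -> A j' -> B j k -> B j' k -> j = j') ->
  \big[op/idx]_(k \in \bigcup_(j in A) B j) F k =
  \big[op/idx]_(j \in A) \big[op/idx]_(k \in B j) F k.
Proof.
move=> Af Bf dis.
suff H : forall r : seq J, uniq r -> (forall j, j \in r -> A j) ->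
  \big[op/idx]_(k \in \bigcup_(j in [set` r]) B j) F k =
  \big[op/idx]_(j <- r) \big[op/idx]_(k \in B j) F k.
  rewrite [RHS]fsbig_finite // -H //.
  - by rewrite fset_setK.
  - by move=> j; rewrite in_fset_set // inE.
elim=> [|j r IH] /=.
  move=> _ _; rewrite big_nil.
  rewrite (_ : \bigcup_(j in _) B j = set0) ?fsbig_set0 //.
  by apply/seteqP; split=> x // [j].
move=> /andP[jr ur] rA.
rewrite big_cons -IH //; last by move=> i ir; apply: rA; rewrite inE ir orbT.
rewrite (_ : \bigcup_(i in _) B i = B j `|` \bigcup_(i in [set` r]) B i).
  apply: fsbigU0.
  - by apply: Bf; apply: rA; rewrite mem_head.
  - apply: bigcup_finite; first exact: finite_seq.
    by move=> i ir; apply: Bf; apply: rA; rewrite inE ir orbT.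
  - move=> x [Bjx [i ir Bix]].
    have E : i = j.
      apply: (dis i j x) => //; last by apply: rA; rewrite mem_head.
      by apply: rA; rewrite inE ir orbT.
    by move: jr; rewrite -E ir.
apply/seteqP; split=> x.
- move=> [i]; rewrite /= inE => /orP[/eqP->|ir] Bx; first by left.
  by right; exists i.
- case=> [Bx|[i ir Bx]]; first by exists j => //=; rewrite mem_head.
  by exists i => //=; rewrite inE ir orbT.
Qed.

Section Sums.
Variables (T : eqType) (Ev : choiceType) (typ : Ev -> T) (time : Ev -> rat) (I : seq Ev).
Variable P : pattern T.
Hypothesis wfP : wf_pattern P.

Local Notation M := (matches typ time I).
Local Notation V := (greta_vertex typ time I P).
Local Notation Pr := (preds typ time I P).
Local Notation End := (end_vertices typ time I P).
Local Notation Pre := (Pre typ time I P).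

Lemma pre_decomp e : V e -> Pre e =
  [set s | s = [:: e] /\ typ e = pstart P] `|` \bigcup_(p in Pr e) [set rcons s e | s in Pre p].
Proof.
move=> Ve; apply/seteqP; split=> s.
- move/(pre_rec wfP s Ve) => [H|[p [s' [Hp Hs' ->]]]]; first by left.
  by right; exists p => //; exists s'.
- case=> [H|[p Hp [s' Hs' <-]]]; apply/(pre_rec wfP _ Ve); first by left.
  by right; exists p, s'.
Qed.

Lemma pre_sum (R : Type) (idx : R) (op : Monoid.com_law idx) (f : seq Ev -> R) e : V e ->
  \big[op/idx]_(s \in Pre e) f s =
  op (if typ e == pstart P then f [:: e] else idx)
     (\big[op/idx]_(p \in Pr e) \big[op/idx]_(s \in Pre p) f (rcons s e)).
Proof.
move=> Ve; rewrite (pre_decomp Ve) fsbigU0.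
- congr (op _ _).
  + case: eqP => H.
    * rewrite (_ : [set s | _] = [set [:: e]]) ?fsbig_set1 //.
      by apply/seteqP; split=> s /=; [case|move=> ->].
    * rewrite (_ : [set s | _] = set0) ?fsbig_set0 //.
      by apply/seteqP; split => s //= [].
  + rewrite fsbig_bigcup_disj.
    * apply: eq_fsbigr => p Hp; apply: fsbig_image.
      by move=> s1 s2 _ _ /rcons_inj [].
    * exact: Pr_fin.
    * by move=> p _; apply: finite_image; apply: pre_fin.
    * move=> p p' s _ _ [s1 H1 <-] [s2 H2 /rcons_inj [E]].
      by subst s2; apply: (pre_last H1 H2).
- by apply: (sub_finite_set _ (finite_set1 [:: e])) => s [-> _].
- apply: bigcup_finite; first exact: Pr_fin.
  by move=> p _; apply: finite_image; apply: pre_fin.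
- move=> s [[-> _] [p _ [s' Hs' E]]].
  case/lastP: s' Hs' E => [|s1 x] Hs' E; first by case: (pre_nonnil Hs').
  by move: E; rewrite -!cats1 -catA; case: (s1) => [|? []].
Qed.

Definition SE (R : realType) (attr : Ev -> R) (E : T) e : set (\bar R) :=
  [set (attr x)%:E | x in [set x | typ x = E /\ exists2 s, Pre e s & x \in s]].

Lemma pre_ex e : V e -> exists s, Pre e s.
Proof.
case=> u Mu eu; case/splitPr: u / eu Mu => u1 u2 Mu.
by exists (rcons u1 e); split; [exists u1|exists u2; rewrite cat_rcons].
Qed.

Lemma SE_rec (R : realType) (attr : Ev -> R) (E : T) e : V e ->
  SE attr E e = (if typ e == E then [set (attr e)%:E] else set0) `|`
                \bigcup_(p in Pr e) SE attr E p.
Proof.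
move=> Ve; apply/seteqP; split=> y.
- move=> [x [Tx [s Hs xs]] <-].
  case/(pre_rec wfP s Ve): Hs => [[Es _]|[p [s' [Hp Hs' Es]]]].
    by left; move: xs; rewrite Es inE => /eqP Ex; subst x; rewrite Tx eqxx.
  move: xs; rewrite Es mem_rcons inE => /orP[/eqP Ex|xs'].
    by left; subst x; rewrite Tx eqxx.
  by right; exists p => //; exists x => //; split => //; exists s'.
- case.
  + case: eqP => // Te ->.
    have [s Hs] := pre_ex Ve; exists e => //; split => //; exists s => //.
    by case: Hs => [[s0 ->] _]; rewrite mem_rcons mem_head.
  + move=> [p Hp [x [Tx [s Hs xs]] <-]].
    exists x => //; split => //; exists (rcons s e).
      by apply/(pre_rec wfP _ Ve); right; exists p, s.
    by rewrite mem_rcons inE xs orbT.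
Qed.

End Sums.

Lemma inf_bigcup (R : realType) (J : Type) (X : set (\bar R)) (A : set J) (S : J -> set (\bar R)) :
  ereal_inf (X `|` \bigcup_(p in A) S p) = ereal_inf (X `|` [set ereal_inf (S p) | p in A]).
Proof.
apply/le_anti/andP; split.
- apply: le_ereal_inf_tmp => y [Xy|[p Ap <-]].
    by apply: ereal_inf_lbound; left.
  apply: le_ereal_inf_tmp => z Sz.
  by apply: ereal_inf_lbound; right; exists p.
- apply: le_ereal_inf_tmp => y [Xy|[p Ap Sy]].
    by apply: ereal_inf_lbound; left.
  apply: le_trans (ereal_inf_lbound Sy).
  by apply: ereal_inf_lbound; right; exists p.
Qed.

Lemma sup_bigcup (R : realType) (J : Type) (X : set (\bar R)) (A : set J) (S : J -> set (\bar R)) :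
  ereal_sup (X `|` \bigcup_(p in A) S p) = ereal_sup (X `|` [set ereal_sup (S p) | p in A]).
Proof.
apply/le_anti/andP; split.
- apply: ge_ereal_sup => y [Xy|[p Ap Sy]].
    by apply: ereal_sup_ubound; left.
  apply: le_trans (ereal_sup_ubound Sy) _.
  by apply: ereal_sup_ubound; right; exists p.
- apply: ge_ereal_sup => y [Xy|[p Ap <-]].
    by apply: ereal_sup_ubound; left.
  apply: ge_ereal_sup => z Sz.
  by apply: ereal_sup_ubound; right; exists p.
Qed.

Lemma natr_fsum (R : realType) (J : choiceType) (A : set J) (F : J -> nat) :
  finite_set A -> ((\big[addn/0%N]_(x \in A) F x)%:R : R) = \sum_(x \in A) ((F x)%:R : R).
Proof. by move=> Af; rewrite !fsbig_finite // natr_sum. Qed.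

Lemma fsum_muln (J : choiceType) (A : set J) c (F : J -> nat) :
  finite_set A -> \big[addn/0%N]_(x \in A) (c * F x)%N = (c * \big[addn/0%N]_(x \in A) F x)%N.
Proof. by move=> Af; rewrite !fsbig_finite // big_distrr. Qed.

Lemma fsum_muln1 (J : choiceType) (A : set J) c :
  finite_set A -> \big[addn/0%N]_(x \in A) c = (c * \big[addn/0%N]_(x \in A) 1%N)%N.
Proof. by move=> Af; rewrite !fsbig_finite // big_distrr /= ; apply: eq_bigr => i _; rewrite muln1. Qed.

Theorem theorem8 (T : eqType) (Ev : choiceType) (typ : Ev -> T) (time : Ev -> rat)
  (I : seq Ev) (R : realType) (attr : Ev -> R) (P : pattern T) (E : T)
  (cnt cntE : Ev -> nat) (mn mx : Ev -> \bar R) (sm : Ev -> R) :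
  wf_pattern P ->
  uniq I ->
  sorted (fun x y => time x <= time y) I ->
  (forall e, e \in I -> 0 <= time e) ->
  let V := greta_vertex typ time I P in
  let Pr := preds typ time I P in
  let End := end_vertices typ time I P in
  (forall e, V e ->
     cnt e = ((typ e == pstart P) : nat) + \big[addn/0%N]_(p \in Pr e) cnt p) ->
  (forall e, V e ->
     cntE e = if typ e == E then (cnt e + \big[addn/0%N]_(p \in Pr e) cntE p)%N
              else \big[addn/0%N]_(p \in Pr e) cntE p) ->
  (forall e, V e ->
     mn e = if typ e == E then ereal_inf ([set (attr e)%:E] `|` mn @` Pr e)
            else ereal_inf (mn @` Pr e)) ->
  (forall e, V e ->
     mx e = if typ e == E then ereal_sup ([set (attr e)%:E] `|` mx @` Pr e)
            else ereal_sup (mx @` Pr e)) ->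
  (forall e, V e ->
     sm e = if typ e == E then attr e * (cnt e)%:R + \sum_(p \in Pr e) sm p
            else \sum_(p \in Pr e) sm p) ->
  [/\ agg_COUNT typ time I P E = \big[addn/0%N]_(e \in End) cntE e,
      agg_MIN typ time I attr P E = ereal_inf (mn @` End),
      agg_MAX typ time I attr P E = ereal_sup (mx @` End),
      agg_SUM typ time I attr P E = \sum_(e \in End) sm e
    & agg_AVG typ time I attr P E =
        (\sum_(e \in End) sm e) / (\big[addn/0%N]_(e \in End) cntE e)%:R].
Proof.
move=> wfP _ _ _ V Pr End; rewrite /V /Pr /End => {V Pr End} Hc HcE Hmn Hmx Hsm.
have cntP : forall e, greta_vertex typ time I P e ->
    cnt e = \big[addn/0%N]_(s \in Pre typ time I P e) 1%N.
  apply: strong_ind => e Ve IH.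
  rewrite Hc // pre_sum //; apply: (f_equal2 addn); first by case: (typ e == pstart P).
  by apply: eq_fsbigr => p /set_mem Hp; apply: IH.
have cntR : forall e, greta_vertex typ time I P e ->
    ((cnt e)%:R : R) = \sum_(s \in Pre typ time I P e) (1 : R).
  by move=> e Ve; rewrite cntP // (@natr_fsum R _ _ (fun _ => 1%N)) //; apply: pre_fin.
have cntEP : forall e, greta_vertex typ time I P e ->
    cntE e = \big[addn/0%N]_(s \in Pre typ time I P e) count (fun x => typ x == E) s.
  apply: strong_ind => e Ve IH.
  rewrite HcE // pre_sum //.
  have inner : forall p, preds typ time I P e p ->
      \big[addn/0%N]_(s \in Pre typ time I P p) count (fun x => typ x == E) (rcons s e)
      = (cntE p + (typ e == E) * cnt p)%N.
    move=> p Hp; rewrite IH // (cntP p (Pr_V Hp)) -fsum_muln1; last exact: pre_fin.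
    rewrite -fsbig_split; last exact: pre_fin.
    by apply: eq_fsbigr => s _; rewrite -cats1 count_cat /= addn0.
  under eq_fsbigr => p Hp do rewrite (inner p (set_mem Hp)).
  rewrite fsbig_split; last exact: Pr_fin.
  rewrite fsum_muln; last exact: Pr_fin.
  have Hce := Hc e Ve.
  rewrite /= addn0.
  by rewrite Hce; case: (typ e == E); case: (typ e == pstart P) => /=; lia.
have smP : forall e, greta_vertex typ time I P e ->
    sm e = \sum_(s \in Pre typ time I P e) \sum_(x <- s | typ x == E) attr x.
  apply: strong_ind => e Ve IH.
  rewrite Hsm // pre_sum //.
  have inner : forall p, preds typ time I P e p ->
      \sum_(s \in Pre typ time I P p) \sum_(x <- rcons s e | typ x == E) attr x
      = sm p + (if typ e == E then attr e else 0) * (cnt p)%:R.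
    move=> p Hp; rewrite IH // (cntR p (Pr_V Hp)) mulr_fsumr.
    rewrite -fsbig_split; last exact: pre_fin.
    by apply: eq_fsbigr => s _; rewrite big_rcons mulr1.
  under eq_fsbigr => p Hp do rewrite (inner p (set_mem Hp)).
  rewrite fsbig_split; last exact: Pr_fin.
  rewrite -mulr_fsumr -natr_fsum; last exact: Pr_fin.
  have Hce := Hc e Ve.
  rewrite big_cons big_nil.
  rewrite Hce natrD.
  by case: eqP => HE; case: (typ e == pstart P) => /=; ring.
have mnP : forall e, greta_vertex typ time I P e -> mn e = ereal_inf (SE typ time I P attr E e).
  apply: strong_ind => e Ve IH.
  rewrite Hmn // SE_rec // inf_bigcup; case: eqP => _.
    by congr (ereal_inf (_ `|` _)); apply: eq_imagel => p Hp; apply: IH.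
  by rewrite set0U; congr ereal_inf; apply: eq_imagel => p Hp; apply: IH.
have mxP : forall e, greta_vertex typ time I P e -> mx e = ereal_sup (SE typ time I P attr E e).
  apply: strong_ind => e Ve IH.
  rewrite Hmx // SE_rec // sup_bigcup; case: eqP => _.
    by congr (ereal_sup (_ `|` _)); apply: eq_imagel => p Hp; apply: IH.
  by rewrite set0U; congr ereal_sup; apply: eq_imagel => p Hp; apply: IH.
have trE : trends typ time I P =
    \bigcup_(e in end_vertices typ time I P) Pre typ time I P e.
  apply/seteqP; split => s.
    by move/(trends_pre typ time I wfP) => [e [He Hs]]; exists e.
  by move=> [e He Hs]; apply/(trends_pre typ time I wfP); exists e.
have disj : forall j j' s, end_vertices typ time I P j -> end_vertices typ time I P j' ->
    Pre typ time I P j s -> Pre typ time I P j' s -> j = j'.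
  by move=> j j' s _ _; apply: pre_last.
have setE : [set (attr e)%:E | e in [set e | typ e = E /\
                                   exists2 s, matches typ time I P s & e \in s]] =
    set0 `|` \bigcup_(e in end_vertices typ time I P) SE typ time I P attr E e.
  apply/seteqP; split => y.
  - move=> [x [Tx [s Ms xs]] <-]; right.
    have [e [He Hs]] := (trends_pre typ time I wfP s).1 Ms.
    by exists e => //; exists x => //; split => //; exists s.
  - case=> [//|[e He [x [Tx [s Hs xs]] <-]]].
    exists x => //; split => //; exists s => //; apply/(trends_pre typ time I wfP s).2; by exists e.
have EF : finite_set (end_vertices typ time I P) by exact: End_fin.
have PF : forall j, end_vertices typ time I P j -> finite_set (Pre typ time I P j).
  by move=> j _; apply: pre_fin.
have HC : agg_COUNT typ time I P E = \big[addn/0%N]_(e \in end_vertices typ time I P) cntE e.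
  rewrite /agg_COUNT trE fsbig_bigcup_disj //.
  by apply: eq_fsbigr => v /set_mem [Vv _]; rewrite cntEP.
have HS : agg_SUM typ time I attr P E = \sum_(e \in end_vertices typ time I P) sm e.
  rewrite /agg_SUM trE fsbig_bigcup_disj //.
  by apply: eq_fsbigr => v /set_mem [Vv _]; rewrite smP.
apply: And5 => //.
- rewrite /agg_MIN setE inf_bigcup set0U; congr ereal_inf.
  by apply: eq_imagel => e [Ve _]; rewrite mnP.
- rewrite /agg_MAX setE sup_bigcup set0U; congr ereal_sup.
  by apply: eq_imagel => e [Ve _]; rewrite mxP.
- by rewrite /agg_AVG HC HS.
Qed.
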